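(* Let $\psi=(x,y,z):\Sigma\to\mathbb{R}^3$ be a $[\varphi,\vec e_3]$-minimal immersion and $\xi=u+iv$ a conformal parameter of $\Sigma$. Then the system $$x^*_\xi=-ie^{\varphi(z)}y_\xi,\qquad y^*_\xi=ie^{\varphi(z)}x_\xi,\qquad z^*_\xi=e^{\varphi(z)}z_\xi$$ for real functions $x^*,y^*,z^*$ is integrable: for each right-hand side $F\in\{-ie^{\varphi(z)}y_\xi,\ ie^{\varphi(z)}x_\xi,\ e^{\varphi(z)}z_\xi\}$ one has $\partial_{\bar\xi}F=\partial_\xi\overline{F}$ (i.e. the would-be mixed derivatives $x^*_{\xi\bar\xi}=x^*_{\bar\xi\xi}$, etc., agree).
   Context: $\varphi$ is a smooth function on an open interval $I$, $\vec e_3=(0,0,1)$. An immersion $\psi=(x,y,z):\Sigma\to\mathbb{R}^3$ with $z(\Sigma)\subseteq I$ is $[\varphi,\vec e_3]$-minimal if, regarding $\Sigma$ as a Riemann surface with the conformal structure of its induced metric, for every conformal parameter $\xi$: $2x_{\xi\bar\xi}+\dot\varphi(z)(z_\xi x_{\bar\xi}+z_{\bar\xi}x_\xi)=0$, $2y_{\xi\bar\xi}+\dot\varphi(z)(z_\xi y_{\bar\xi}+z_{\bar\xi}y_\xi)=0$, $2z_{\xi\bar\xi}-\dot\varphi(z)(|x_\xi|^2+|y_\xi|^2-|z_\xi|^2)=0$ (equivalently, its mean curvature vector is $\dot\varphi(z)\vec e_3^\perp$). *)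

(* Defs.v *)
From Stdlib Require Import Reals List.
From Coquelicot Require Import Coquelicot.
Open Scope R_scope.

(** Real functions of the conformal parameter xi = u + i v, on a domain of R^2. *)
Definition Du (f : R -> R -> R) : R -> R -> R :=
  fun u v => Derive (fun t => f t v) u.
Definition Dv (f : R -> R -> R) : R -> R -> R :=
  fun u v => Derive (fun t => f u t) v.

Fixpoint iterD (l : list bool) (f : R -> R -> R) : R -> R -> R :=
  match l with
  | nil => f
  | b :: l' => (if b then Du else Dv) (iterD l' f)
  end.

Definition open2 (U : R -> R -> Prop) : Prop :=
  forall u v, U u v -> exists eps, 0 < eps /\
    forall u' v', Rabs (u' - u) < eps -> Rabs (v' - v) < eps -> U u' v'.

Definition smooth2 (U : R -> R -> Prop) (f : R -> R -> R) : Prop :=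
  forall (l : list bool) u v, U u v ->
    ex_derive (fun t => iterD l f t v) u /\
    ex_derive (fun t => iterD l f u t) v /\
    continuous (fun p : R * R => iterD l f (fst p) (snd p)) (u, v).

Definition in_interval (a b : Rbar) (t : R) : Prop :=
  Rbar_lt a t /\ Rbar_lt t b.
Definition smooth_on_interval (a b : Rbar) (phi : R -> R) : Prop :=
  forall (n : nat) t, in_interval a b t -> ex_derive (Derive_n phi n) t.

(** complex-valued functions on the domain, and the Wirtinger operators
    F_xi = (F_u - i F_v)/2, F_xibar = (F_u + i F_v)/2 *)
Definition CDu (F : R -> R -> C) : R -> R -> C :=
  fun u v => (Derive (fun t => fst (F t v)) u, Derive (fun t => snd (F t v)) u).
Definition CDv (F : R -> R -> C) : R -> R -> C :=
  fun u v => (Derive (fun t => fst (F u t)) v, Derive (fun t => snd (F u t)) v).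

Definition dxi (F : R -> R -> C) : R -> R -> C :=
  fun u v => Cmult (RtoC (/2)) (Cminus (CDu F u v) (Cmult Ci (CDv F u v))).
Definition dxibar (F : R -> R -> C) : R -> R -> C :=
  fun u v => Cmult (RtoC (/2)) (Cplus (CDu F u v) (Cmult Ci (CDv F u v))).

Definition cR (f : R -> R -> R) : R -> R -> C := fun u v => RtoC (f u v).

Definition dot3 (a b : R * R * R) : R :=
  let '(a1, a2, a3) := a in let '(b1, b2, b3) := b in a1 * b1 + a2 * b2 + a3 * b3.

Definition conformal_immersion (U : R -> R -> Prop) (x y z : R -> R -> R) : Prop :=
  forall u v, U u v ->
    let pu := (Du x u v, Du y u v, Du z u v) in
    let pv := (Dv x u v, Dv y u v, Dv z u v) in
    dot3 pu pu = dot3 pv pv /\ dot3 pu pv = 0 /\ 0 < dot3 pu pu.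

Definition phi_e3_minimal (U : R -> R -> Prop) (phi : R -> R) (x y z : R -> R -> R) : Prop :=
  forall u v, U u v ->
    let dphi := RtoC (Derive phi (z u v)) in
    Cplus (Cmult (RtoC 2) (dxi (dxibar (cR x)) u v))
      (Cmult dphi (Cplus (Cmult (dxi (cR z) u v) (dxibar (cR x) u v))
                         (Cmult (dxibar (cR z) u v) (dxi (cR x) u v)))) = RtoC 0 /\
    Cplus (Cmult (RtoC 2) (dxi (dxibar (cR y)) u v))
      (Cmult dphi (Cplus (Cmult (dxi (cR z) u v) (dxibar (cR y) u v))
                         (Cmult (dxibar (cR z) u v) (dxi (cR y) u v)))) = RtoC 0 /\
    Cminus (Cmult (RtoC 2) (dxi (dxibar (cR z)) u v))
      (Cmult dphi (RtoC (Cmod (dxi (cR x) u v) ^ 2 + Cmod (dxi (cR y) u v) ^ 2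
                         - Cmod (dxi (cR z) u v) ^ 2))) = RtoC 0.

Definition Fx (phi : R -> R) (y z : R -> R -> R) : R -> R -> C :=
  fun u v => Cmult (Copp Ci) (Cmult (RtoC (exp (phi (z u v)))) (dxi (cR y) u v)).
Definition Fy (phi : R -> R) (x z : R -> R -> R) : R -> R -> C :=
  fun u v => Cmult Ci (Cmult (RtoC (exp (phi (z u v)))) (dxi (cR x) u v)).
Definition Fz (phi : R -> R) (z : R -> R -> R) : R -> R -> C :=
  fun u v => Cmult (RtoC (exp (phi (z u v)))) (dxi (cR z) u v).

Definition integrable_rhs (U : R -> R -> Prop) (F : R -> R -> C) : Prop :=
  forall u v, U u v ->
    dxibar F u v = dxi (fun u' v' => Cconj (F u' v')) u v.

(* Main.v *)
Require Import Defs.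
From Stdlib Require Import Reals Lra List FunctionalExtensionality.
From Coquelicot Require Import Coquelicot.
Open Scope R_scope.

Lemma dxi_cR f u v : dxi (cR f) u v = (/2 * Du f u v, - /2 * Dv f u v).
Proof.
  unfold dxi, CDu, CDv, cR, RtoC; simpl. rewrite !Derive_const.
  unfold Du, Dv. apply injective_projections; simpl; ring.
Qed.

Lemma dxibar_cR f : dxibar (cR f) = fun u v => (/2 * Du f u v, /2 * Dv f u v).
Proof.
  apply functional_extensionality; intro u; apply functional_extensionality; intro v.
  unfold dxibar, CDu, CDv, cR, RtoC; simpl. rewrite !Derive_const.
  unfold Du, Dv. apply injective_projections; simpl; ring.
Qed.

Lemma integ U (P Q : R -> R -> R) :
  (forall u v, U u v -> Du Q u v + Dv P u v = 0) ->
  integrable_rhs U (fun u v => (P u v, Q u v)).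
Proof.
  intros H u v Hu. specialize (H u v Hu).
  unfold dxi, dxibar, CDu, CDv, Cconj; simpl.
  rewrite !Derive_opp. unfold Du, Dv in H.
  replace (Derive (Q u) v) with (Derive (fun t => Q u t) v) by reflexivity.
  apply injective_projections; simpl; lra.
Qed.

Lemma cont2 (g : R -> R -> R) u v :
  continuous (fun p : R * R => g (fst p) (snd p)) (u, v) -> continuity_2d_pt g u v.
Proof.
  intros Hc eps.
  assert (H := Hc (fun r => ball (g u v) eps r) (locally_ball _ eps)).
  destruct H as [d Hd].
  exists d. intros u' v' H1 H2.
  apply (Hd (u', v')). split; assumption.
Qed.

Section S.
Variables (a b : Rbar) (phi : R -> R) (U : R -> R -> Prop) (z : R -> R -> R).
Hypothesis Hphi : smooth_on_interval a b phi.
Hypothesis Hz : smooth2 U z.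
Hypothesis HzI : forall u v, U u v -> in_interval a b (z u v).

Lemma dEu u v : U u v -> is_derive (fun t => exp (phi (z t v))) u
   (exp (phi (z u v)) * (Derive phi (z u v) * Du z u v)).
Proof.
  intro Hu.
  assert (Hp : ex_derive phi (z u v)) by exact (Hphi 0%nat _ (HzI _ _ Hu)).
  assert (Hzz : ex_derive (fun t => z t v) u) by exact (proj1 (Hz nil u v Hu)).
  apply Derive_correct in Hp. apply Derive_correct in Hzz.
  pose proof (is_derive_comp phi (fun t => z t v) u _ _ Hp Hzz) as H1.
  pose proof (is_derive_comp exp (fun t => phi (z t v)) u _ _ (is_derive_exp _) H1) as H2.
  match type of H2 with is_derive _ _ ?d =>
    replace (exp (phi (z u v)) * (Derive phi (z u v) * Du z u v)) with d end.
  - exact H2.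
  - unfold scal; simpl; unfold mult; simpl; unfold Du; ring.
Qed.

Lemma dEv u v : U u v -> is_derive (fun t => exp (phi (z u t))) v
   (exp (phi (z u v)) * (Derive phi (z u v) * Dv z u v)).
Proof.
  intro Hu.
  assert (Hp : ex_derive phi (z u v)) by exact (Hphi 0%nat _ (HzI _ _ Hu)).
  assert (Hzz : ex_derive (fun t => z u t) v) by exact (proj1 (proj2 (Hz nil u v Hu))).
  apply Derive_correct in Hp. apply Derive_correct in Hzz.
  pose proof (is_derive_comp phi (fun t => z u t) v _ _ Hp Hzz) as H1.
  pose proof (is_derive_comp exp (fun t => phi (z u t)) v _ _ (is_derive_exp _) H1) as H2.
  match type of H2 with is_derive _ _ ?d =>
    replace (exp (phi (z u v)) * (Derive phi (z u v) * Dv z u v)) with d end.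
  - exact H2.
  - unfold scal; simpl; unfold mult; simpl; unfold Dv; ring.
Qed.

Lemma dEgu (g : R -> R -> R) c u v : U u v -> ex_derive (fun t => g t v) u ->
  Derive (fun t => c * (exp (phi (z t v)) * g t v)) u =
  c * (exp (phi (z u v)) * (Derive phi (z u v) * Du z u v) * g u v
       + exp (phi (z u v)) * Du g u v).
Proof.
  intros Hu Hg. rewrite Derive_scal. f_equal.
  apply is_derive_unique.
  apply Derive_correct in Hg.
  pose proof (is_derive_mult _ _ u _ _ (dEu u v Hu) Hg) as H.
  unfold Du. apply H. intros; apply Rmult_comm.
Qed.

Lemma dEgv (g : R -> R -> R) c u v : U u v -> ex_derive (fun t => g u t) v ->
  Derive (fun t => c * (exp (phi (z u t)) * g u t)) v =
  c * (exp (phi (z u v)) * (Derive phi (z u v) * Dv z u v) * g u v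
       + exp (phi (z u v)) * Dv g u v).
Proof.
  intros Hu Hg. rewrite Derive_scal. f_equal.
  apply is_derive_unique.
  apply Derive_correct in Hg.
  pose proof (is_derive_mult _ _ v _ _ (dEv u v Hu) Hg) as H.
  unfold Dv. apply H. intros; apply Rmult_comm.
Qed.
End S.


Lemma Fx_eq phi y z : Fx phi y z = fun u v =>
  (-/2 * (exp (phi (z u v)) * Dv y u v), -/2 * (exp (phi (z u v)) * Du y u v)).
Proof.
  apply functional_extensionality; intro u; apply functional_extensionality; intro v.
  unfold Fx; rewrite dxi_cR. apply injective_projections; simpl; ring.
Qed.
Lemma Fy_eq phi x z : Fy phi x z = fun u v =>
  (/2 * (exp (phi (z u v)) * Dv x u v), /2 * (exp (phi (z u v)) * Du x u v)).
Proof.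
  apply functional_extensionality; intro u; apply functional_extensionality; intro v.
  unfold Fy; rewrite dxi_cR. apply injective_projections; simpl; ring.
Qed.
Lemma Fz_eq phi z : Fz phi z = fun u v =>
  (/2 * (exp (phi (z u v)) * Du z u v), -/2 * (exp (phi (z u v)) * Dv z u v)).
Proof.
  apply functional_extensionality; intro u; apply functional_extensionality; intro v.
  unfold Fz; rewrite dxi_cR. apply injective_projections; simpl; ring.
Qed.

Lemma min_re phi (x z : R -> R -> R) u v :
  Cplus (Cmult (RtoC 2) (dxi (dxibar (cR x)) u v))
      (Cmult (RtoC (Derive phi (z u v))) (Cplus (Cmult (dxi (cR z) u v) (dxibar (cR x) u v))
                         (Cmult (dxibar (cR z) u v) (dxi (cR x) u v)))) = RtoC 0 ->
  Du (Du x) u v + Dv (Dv x) u v + Derive phi (z u v) * (Du z u v * Du x u v + Dv z u v * Dv x u v) = 0.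
Proof.
  intro H. apply (f_equal fst) in H.
  rewrite !dxibar_cR, !dxi_cR in H. unfold dxi, CDu, CDv in H. simpl in H.
  rewrite !Derive_scal in H. unfold Du, Dv in *.
  match type of H with ?h = _ => apply (@eq_trans R _ (2 * h)) end.
  - field.
  - rewrite H; simpl; ring.
Qed.

Lemma schwarz_z U z u v : open2 U -> smooth2 U z -> U u v ->
  Du (Dv z) u v = Dv (Du z) u v.
Proof.
  intros HU Hz Hu.
  apply (Schwarz z u v).
  - destruct (HU u v Hu) as [eps [Heps Hb]].
    exists (mkposreal eps Heps). intros u' v' H1 H2.
    assert (Hu' : U u' v') by (apply Hb; assumption).
    split; [exact (proj1 (Hz nil u' v' Hu')) |].
    split; [exact (proj1 (proj2 (Hz nil u' v' Hu'))) |].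
    split; [exact (proj1 (Hz (false :: nil) u' v' Hu')) |].
    exact (proj1 (proj2 (Hz (true :: nil) u' v' Hu'))).
  - apply cont2. exact (proj2 (proj2 (Hz (true :: false :: nil) u v Hu))).
  - apply cont2. exact (proj2 (proj2 (Hz (false :: true :: nil) u v Hu))).
Qed.

Theorem proposition1 (a b : Rbar) (phi : R -> R) (U : R -> R -> Prop)
  (x y z : R -> R -> R) :
  Rbar_lt a b ->
  smooth_on_interval a b phi ->
  open2 U ->
  smooth2 U x -> smooth2 U y -> smooth2 U z ->
  (forall u v, U u v -> in_interval a b (z u v)) ->
  conformal_immersion U x y z ->
  phi_e3_minimal U phi x y z ->
  integrable_rhs U (Fx phi y z) /\
  integrable_rhs U (Fy phi x z) /\
  integrable_rhs U (Fz phi z).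
Proof.
  intros _ Hphi HU Hx Hy Hz HzI _ Hmin.
  split; [| split].
  - rewrite Fx_eq. apply integ. intros u v Hu.
    change (Derive (fun t => -/2 * (exp (phi (z t v)) * Du y t v)) u
          + Derive (fun t => -/2 * (exp (phi (z u t)) * Dv y u t)) v = 0).
    rewrite (dEgu a b phi U z Hphi Hz HzI (Du y) (-/2) u v Hu (proj1 (Hy (true :: nil) u v Hu))).
    rewrite (dEgv a b phi U z Hphi Hz HzI (Dv y) (-/2) u v Hu (proj1 (proj2 (Hy (false :: nil) u v Hu)))).
    destruct (Hmin u v Hu) as [_ [H _]].
    apply min_re in H.
    match type of H with ?h = _ => apply (@eq_trans R _ (-/2 * exp (phi (z u v)) * h)) end.
    + ring.
    + rewrite H; ring.
  - rewrite Fy_eq. apply integ. intros u v Hu.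
    change (Derive (fun t => /2 * (exp (phi (z t v)) * Du x t v)) u
          + Derive (fun t => /2 * (exp (phi (z u t)) * Dv x u t)) v = 0).
    rewrite (dEgu a b phi U z Hphi Hz HzI (Du x) (/2) u v Hu (proj1 (Hx (true :: nil) u v Hu))).
    rewrite (dEgv a b phi U z Hphi Hz HzI (Dv x) (/2) u v Hu (proj1 (proj2 (Hx (false :: nil) u v Hu)))).
    destruct (Hmin u v Hu) as [H [_ _]].
    apply min_re in H.
    match type of H with ?h = _ => apply (@eq_trans R _ (/2 * exp (phi (z u v)) * h)) end.
    + ring.
    + rewrite H; ring.
  - rewrite Fz_eq. apply integ. intros u v Hu.
    change (Derive (fun t => -/2 * (exp (phi (z t v)) * Dv z t v)) u
          + Derive (fun t => /2 * (exp (phi (z u t)) * Du z u t)) v = 0).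
    rewrite (dEgu a b phi U z Hphi Hz HzI (Dv z) (-/2) u v Hu (proj1 (Hz (false :: nil) u v Hu))).
    rewrite (dEgv a b phi U z Hphi Hz HzI (Du z) (/2) u v Hu (proj1 (proj2 (Hz (true :: nil) u v Hu)))).
    rewrite (schwarz_z U z u v HU Hz Hu). ring.
Qed.
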